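(* For any $\mathbf{x}_i\in\chi$ and any $\mathbf{x}\in\mathcal{D}_{i,\mathrm{DP}}$: (i) $\mathcal{D}_{i,\mathrm{DP}}\subseteq\mathcal{D}_{i,\mathrm{ML}}$; (ii) $\|\mathbf{x}-\mathbf{y}\|\ge\|\mathbf{x}_i-\mathbf{x}_j\|$ for every $\mathbf{x}_j\in\chi$ and every $\mathbf{y}\in\mathcal{D}_{j,\mathrm{DP}}$; (iii) $\|\mathbf{x}-\mathbf{x}_j\|\ge\|\mathbf{x}_i-\mathbf{x}_j\|$ for every $\mathbf{x}_j\in\chi$, with equality (for $\mathbf{x}_j\neq\mathbf{x}_i$) only when $\mathbf{x}=\mathbf{x}_i$.
   Context: A constellation is a finite set $\chi=\{\mathbf{x}_1,\dots,\mathbf{x}_M\}\subset\mathbb{R}^2$ of distinct points, $M\ge 3$, not all lying on one line. The Voronoi region of $\mathbf{x}_i$ is $\mathcal{D}_{i,\mathrm{ML}}=\{\mathbf{x}\in\mathbb{R}^2:\|\mathbf{x}-\mathbf{x}_i\|\le\|\mathbf{x}-\mathbf{x}_j\|\ \forall j\}$. Two distinct points $\mathbf{x}_i,\mathbf{x}_j$ are neighbors if their Voronoi regions share an edge (a common boundary segment or ray of positive length); $\mathcal{S}_i$ denotes the set of neighbors of $\mathbf{x}_i$. The distance preserving constructive interference region (DPCIR) of $\mathbf{x}_i$ is $\mathcal{D}_{i,\mathrm{DP}}=\{\mathbf{x}\in\mathbb{R}^2:(\mathbf{x}_i-\mathbf{x}_j)^T\mathbf{x}\ge(\mathbf{x}_i-\mathbf{x}_j)^T(\mathbf{x}_i+\mathbf{x}_j)/2+\|\mathbf{x}_i-\mathbf{x}_j\|^2/2\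 \forall\mathbf{x}_j\in\mathcal{S}_i\}$, equivalently $\{\mathbf{x}:(\mathbf{x}_i-\mathbf{x}_j)^T(\mathbf{x}-\mathbf{x}_i)\ge 0\ \forall\mathbf{x}_j\in\mathcal{S}_i\}$. *)

(* Defs.v *)
From Stdlib Require Import Reals List.
Open Scope R_scope.

Definition pt := (R * R)%type.

Definition padd (p q : pt) : pt := (fst p + fst q, snd p + snd q).
Definition psub (p q : pt) : pt := (fst p - fst q, snd p - snd q).
Definition pscale (t : R) (p : pt) : pt := (t * fst p, t * snd p).
Definition dot (p q : pt) : R := fst p * fst q + snd p * snd q.
Definition norm (p : pt) : R := sqrt (dot p p).
Definition pdist (p q : pt) : R := norm (psub p q).

Definition collinear (chi : list pt) : Prop :=
  exists a b c : R, (a <> 0 \/ b <> 0) /\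
    forall p, In p chi -> a * fst p + b * snd p = c.

Definition constellation (chi : list pt) : Prop :=
  NoDup chi /\ (3 <= length chi)%nat /\ ~ collinear chi.

Definition voronoi (chi : list pt) (xi x : pt) : Prop :=
  forall xj, In xj chi -> pdist x xi <= pdist x xj.

Definition on_segment (a b z : pt) : Prop :=
  exists t, 0 <= t <= 1 /\ z = padd a (pscale t (psub b a)).

Definition neighbor (chi : list pt) (xi xj : pt) : Prop :=
  In xi chi /\ In xj chi /\ xi <> xj /\
  exists a b : pt, a <> b /\
    forall z, on_segment a b z -> voronoi chi xi z /\ voronoi chi xj z.

Definition dpcir (chi : list pt) (xi x : pt) : Prop :=
  forall xj, neighbor chi xi xj ->
    dot (psub xi xj) x >=
      dot (psub xi xj) (padd xi xj) / 2 + (norm (psub xi xj))^2 / 2.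

(* Main.v *)
Require Import Defs.
From Stdlib Require Import Reals List Lra Psatz Classical.
Open Scope R_scope.

Definition A2 (xi k : pt) : R := dot (psub xi k) (psub xi k).

Lemma dot_add p q r : dot (padd p q) r = dot p r + dot q r.
Proof. unfold dot, padd; simpl; ring. Qed.
Lemma dot_scale a p q : dot (pscale a p) q = a * dot p q.
Proof. unfold dot, pscale; simpl; ring. Qed.
Lemma sq2_nonneg a b : 0 <= a*a+b*b.
Proof. apply Rplus_le_le_0_compat; apply Rle_0_sqr. Qed.
Lemma sq2_zero a b : a*a+b*b = 0 -> a = 0 /\ b = 0.
Proof.
  intro H. pose proof (Rle_0_sqr a). pose proof (Rle_0_sqr b). unfold Rsqr in *.
  split; apply Rsqr_0_uniq; unfold Rsqr; lra.
Qed.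
Lemma A2_nonneg xi k : 0 <= A2 xi k.
Proof. unfold A2, dot, psub; simpl; apply sq2_nonneg. Qed.
Lemma pt_eq (p q : pt) : fst p = fst q -> snd p = snd q -> p = q.
Proof. destruct p, q; simpl; intros; subst; auto. Qed.
Lemma A2_pos xi k : k <> xi -> 0 < A2 xi k.
Proof.
  intro H. unfold A2, dot, psub; simpl.
  destruct (Req_dec ((fst xi - fst k) * (fst xi - fst k) + (snd xi - snd k) * (snd xi - snd k)) 0) as [E|E].
  - exfalso; apply H. apply sq2_zero in E. apply pt_eq; lra.
  - pose proof (sq2_nonneg (fst xi - fst k) (snd xi - snd k)). lra.
Qed.
Lemma dot_self_zero w p : dot w (psub p p) = 0.
Proof. unfold dot, psub; simpl; ring. Qed.
Lemma gid z xi l : dot (psub z l) (psub z l) =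
  dot (psub z xi) (psub z xi) + 2 * dot (psub z xi) (psub xi l) + A2 xi l.
Proof. unfold A2, dot, psub; simpl; ring. Qed.
Lemma pdist_le z p q : dot (psub z p) (psub z p) <= dot (psub z q) (psub z q) ->
  pdist z p <= pdist z q.
Proof. intro; unfold pdist, norm; apply sqrt_le_1_alt; auto. Qed.

Lemma ev_list {T} (P : T -> Prop) (al be : T -> R) (l : list T) :
 (forall j, In j l -> P j -> al j <> 0 \/ be j <> 0) ->
 exists d, 0 < d /\ forall s, 0 < s < d -> forall j, In j l -> P j ->
   al j + be j * s <> 0 /\ (0 < al j -> 0 < al j + be j * s) /\
   (al j < 0 -> al j + be j * s < 0).
Proof.
  induction l as [|x l IH]; intros H.
  - exists 1. split; [lra|]. intros s _ j [].
  - destruct IH as [d1 [Hd1 H1]]. { intros j Hj; apply H; right; auto. }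
    assert (Hx: exists d2, 0 < d2 /\ forall s, 0 < s < d2 -> P x ->
      al x + be x * s <> 0 /\ (0 < al x -> 0 < al x + be x * s) /\
      (al x < 0 -> al x + be x * s < 0)).
    { destruct (Req_dec (al x) 0) as [E|E].
      - exists 1. split. lra. intros s Hs Px.
        destruct (H x (or_introl eq_refl) Px) as [F|F]; [contradiction|].
        rewrite E. split; [|split; lra]. intro C.
        assert (be x * s = 0) by lra. apply Rmult_integral in H0. destruct H0; lra.
      - exists (Rabs (al x) / (Rabs (be x) + 1)). pose proof (Rabs_pos (be x)).
        split. apply Rdiv_lt_0_compat; [apply Rabs_pos_lt; auto | lra].
        intros s [Hs1 Hs2] Px.
        apply Rmult_lt_compat_r with (r := Rabs (be x) + 1) in Hs2; [|lra].
        replace (Rabs (al x) / (Rabs (be x) + 1) * (Rabs (be x) + 1)) with (Rabs (al x)) in Hs2 by (field; lra).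
        assert (Hb: Rabs (be x * s) < Rabs (al x)).
        { rewrite Rabs_mult, (Rabs_right s) by lra. nra. }
        revert Hb E. unfold Rabs; destruct (Rcase_abs (be x * s)), (Rcase_abs (al x)); intros; repeat split; lra. }
    destruct Hx as [d2 [Hd2 H2]].
    exists (Rmin d1 d2). split. apply Rmin_glb_lt; auto.
    intros s Hs j Hj Pj.
    assert (s < d1) by (apply Rlt_le_trans with (Rmin d1 d2); [lra| apply Rmin_l]).
    assert (s < d2) by (apply Rlt_le_trans with (Rmin d1 d2); [lra| apply Rmin_r]).
    destruct Hj as [<-|Hj].
    + apply H2; auto; lra.
    + apply H1; auto; lra.
Qed.

Lemma argmin_list {T} (P : T -> Prop) (f : T -> R) (l : list T) x0 :
  In x0 l -> P x0 -> exists k, In k l /\ P k /\ forall j, In j l -> P j -> f k <= f j.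
Proof.
  revert x0; induction l as [|x l IH]; intros x0 H0 P0; [destruct H0|].
  destruct (classic (exists y, In y l /\ P y)) as [[y [Hy Py]]|N].
  - destruct (IH y Hy Py) as [k [Hk [Pk Hm]]].
    destruct (Rle_lt_dec (f k) (f x)) as [L|L].
    + destruct (classic (P x)) as [Px|Px].
      * exists k; split; [right; auto|split; [auto|]]; intros j [<-|Hj] Pj; auto.
      * exists k; split; [right; auto|split; [auto|]]; intros j [<-|Hj] Pj; auto; contradiction.
    + destruct (classic (P x)) as [Px|Px].
      * exists x; split; [left; auto|split; [auto|]]; intros j [<-|Hj] Pj; [lra|].
        specialize (Hm j Hj Pj). lra.
      * exists k; split; [right; auto|split; [auto|]]; intros j [<-|Hj] Pj; auto; contradiction.
  - destruct H0 as [<-|H0]; [|exfalso; apply N; eauto].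
    exists x; split; [left; auto|split; [auto|]]; intros j [<-|Hj] Pj; [lra|].
    exfalso; apply N; eauto.
Qed.

Definition cvec (xi k l : pt) : pt :=
  (A2 xi k * fst (psub xi l) - A2 xi l * fst (psub xi k),
   A2 xi k * snd (psub xi l) - A2 xi l * snd (psub xi k)).

Lemma dot_cvec v xi k l : dot v (cvec xi k l) = A2 xi k * dot v (psub xi l) - A2 xi l * dot v (psub xi k).
Proof. unfold cvec, dot; simpl; ring. Qed.

Lemma cvec_nz xi k l : k <> xi -> l <> xi -> k <> l ->
  fst (cvec xi k l) <> 0 \/ snd (cvec xi k l) <> 0.
Proof.
  intros Hk Hl Hkl. pose proof (A2_pos xi k Hk) as Pk. pose proof (A2_pos xi l Hl) as Pl.
  apply NNPP; intro N. apply not_or_and in N. destruct N as [N1 N2].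
  apply NNPP in N1; apply NNPP in N2. unfold cvec in N1, N2; simpl in N1, N2.
  revert Pk Pl N1 N2. unfold A2, dot, psub; simpl.
  set (p1 := fst xi - fst k). set (p2 := snd xi - snd k).
  set (q1 := fst xi - fst l). set (q2 := snd xi - snd l).
  intros Pk Pl N1 N2.
  set (Ak := p1*p1+p2*p2) in *. set (Al := q1*q1+q2*q2) in *.
  assert (E1: Ak * q1 = Al * p1) by lra. assert (E2: Ak * q2 = Al * p2) by lra.
  assert (E3: Ak*Ak*Al = Al*Al*Ak).
  { unfold Al at 1. unfold Ak at 3.
    replace (Ak * Ak * (q1 * q1 + q2 * q2)) with ((Ak*q1)*(Ak*q1) + (Ak*q2)*(Ak*q2)) by ring.
    rewrite E1, E2. ring. }
  assert (E4: Ak = Al).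
  { apply Rmult_eq_reg_r with (Ak*Al); [|nra]. lra. }
  assert (q1 = p1). { apply Rmult_eq_reg_l with Ak; [|lra]. rewrite E1, E4. ring. }
  assert (q2 = p2). { apply Rmult_eq_reg_l with Ak; [|lra]. rewrite E2, E4. ring. }
  apply Hkl. apply pt_eq; unfold p1, q1, p2, q2 in *; lra.
Qed.

Lemma neighbor_of (chi : list pt) xi k0 v t :
  In xi chi -> In k0 chi -> k0 <> xi ->
  A2 xi k0 + 2 * t * dot v (psub xi k0) = 0 ->
  (forall l, In l chi -> l <> xi -> l <> k0 -> 0 < A2 xi l + 2 * t * dot v (psub xi l)) ->
  neighbor chi xi k0.
Proof.
  intros Hi Hk Hki H0 Hp.
  set (dd := psub xi k0). set (e := (- snd dd, fst dd) : pt).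
  assert (Ee : dot e dd = 0) by (unfold e, dot; simpl; ring).
  destruct (ev_list (fun l => l <> xi /\ l <> k0) (fun l => A2 xi l + 2 * t * dot v (psub xi l))
     (fun l => 2 * dot e (psub xi l)) chi) as [d1 [Hd1 H1]].
  { intros j Hj [P1 P2]. left. specialize (Hp j Hj P1 P2). lra. }
  destruct (ev_list (fun l => l <> xi /\ l <> k0) (fun l => A2 xi l + 2 * t * dot v (psub xi l))
     (fun l => - (2 * dot e (psub xi l))) chi) as [d2 [Hd2 H2]].
  { intros j Hj [P1 P2]. left. specialize (Hp j Hj P1 P2). lra. }
  set (de := Rmin d1 d2 / 2).
  assert (Hm: 0 < Rmin d1 d2) by (apply Rmin_glb_lt; auto).
  assert (de < d1) by (pose proof (Rmin_l d1 d2); unfold de; lra).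
  assert (de < d2) by (pose proof (Rmin_r d1 d2); unfold de; lra).
  assert (Hde: 0 < de) by (unfold de; lra).
  assert (Hpos: forall l, In l chi -> l <> xi -> l <> k0 -> forall sg, -de <= sg <= de ->
     0 < A2 xi l + 2 * t * dot v (psub xi l) + 2 * dot e (psub xi l) * sg).
  { intros l Hl P1 P2 sg Hsg.
    assert (G1 := proj1 (proj2 (H1 de (conj Hde H) l Hl (conj P1 P2))) (Hp l Hl P1 P2)).
    assert (G2 := proj1 (proj2 (H2 de (conj Hde H3) l Hl (conj P1 P2))) (Hp l Hl P1 P2)).
    set (al := A2 xi l + 2 * t * dot v (psub xi l)) in *.
    set (be := 2 * dot e (psub xi l)) in *.
    assert (2 * de * (al + be * sg) = (al + be * de) * (de + sg) + (al + - be * de) * (de - sg)) by ring.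
    destruct (Req_dec sg de).
    + subst sg; lra.
    + assert (0 < (al + - be * de) * (de - sg)) by (apply Rmult_lt_0_compat; lra).
      assert (0 <= (al + be * de) * (de + sg)) by (apply Rmult_le_pos; lra).
      nra. }
  split; [auto|split; [auto|split; [auto|]]].
  exists (padd xi (padd (pscale t v) (pscale (- de) e))), (padd xi (padd (pscale t v) (pscale de e))).
  split.
  { intro Heq. apply Hki.
    assert (F1 := f_equal fst Heq). assert (F2 := f_equal snd Heq).
    unfold padd, pscale, e, dd, psub in F1, F2; simpl in F1, F2.
    apply pt_eq; nra. }
  intros z [tau [Htau Hz]].
  set (sg := (2 * tau - 1) * de).
  assert (Hsg: -de <= sg <= de) by (unfold sg; split; nra).
  assert (Hd: forall l, dot (psub z l) (psub z l) = dot (psub z xi) (psub z xi) +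
     (A2 xi l + 2 * t * dot v (psub xi l) + 2 * dot e (psub xi l) * sg)).
  { intro l. rewrite (gid z xi l). subst z. unfold sg, A2, dot, padd, psub, pscale; simpl. ring. }
  assert (Hz0: dot (psub z k0) (psub z k0) = dot (psub z xi) (psub z xi)).
  { rewrite Hd. unfold dd in Ee. rewrite Ee. lra. }
  assert (Vi: voronoi chi xi z).
  { intros l Hl. destruct (classic (l = xi)) as [->|N1]; [lra|].
    destruct (classic (l = k0)) as [->|N2]; [apply pdist_le; lra|].
    apply pdist_le. rewrite (Hd l). specialize (Hpos l Hl N1 N2 sg Hsg). lra. }
  split; auto.
  intros l Hl. apply Rle_trans with (pdist z xi); [|apply Vi; auto].
  apply pdist_le; lra.
Qed.

Lemma key (chi : list pt) (xi w : pt) :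
  In xi chi ->
  (forall k, neighbor chi xi k -> 0 <= A2 xi k + 2 * dot w (psub xi k)) ->
  forall m, In m chi -> 0 <= A2 xi m + 2 * dot w (psub xi m).
Proof.
  intros Hi HN m Hm.
  destruct (Rle_lt_dec 0 (A2 xi m + 2 * dot w (psub xi m))) as [|Hbad]; [auto|exfalso].
  assert (Hmi : m <> xi).
  { intro E; subst m. rewrite dot_self_zero in Hbad. unfold A2 in Hbad.
    rewrite dot_self_zero in Hbad. lra. }
  set (P := fun kl : pt * pt => fst kl <> xi /\ snd kl <> xi /\ fst kl <> snd kl).
  destruct (ev_list P (fun kl => fst (cvec xi (fst kl) (snd kl)))
      (fun kl => snd (cvec xi (fst kl) (snd kl))) (list_prod chi chi)) as [dA [HdA HA]].
  { intros [k l] _ [P1 [P2 P3]]. apply cvec_nz; auto. }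
  set (u := (1, dA / 2) : pt).
  assert (Hu: forall k l, In k chi -> In l chi -> k <> xi -> l <> xi -> k <> l ->
      dot u (cvec xi k l) <> 0).
  { intros k l Hk Hl P1 P2 P3.
    assert (HH := proj1 (HA (dA/2) ltac:(lra) (k,l) (in_prod chi chi k l Hk Hl) (conj P1 (conj P2 P3)))).
    simpl in HH. unfold u, dot; simpl. intro C; apply HH. lra. }
  destruct (ev_list (fun k => k <> xi) (fun k => A2 xi k) (fun k => 2 * dot u (psub xi k)) chi)
    as [dB [HdB HB]].
  { intros j _ Pj. left. pose proof (A2_pos xi j Pj). lra. }
  set (eps := dB / 2).
  assert (Heps: 0 < eps) by (unfold eps; lra).
  assert (He: forall k, In k chi -> k <> xi -> 0 < A2 xi k + 2 * dot u (psub xi k) * eps).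
  { intros k Hk Pk. apply (HB eps ltac:(unfold eps; lra) k Hk Pk). apply A2_pos; auto. }
  set (ue := pscale eps u).
  destruct (ev_list P (fun kl => dot w (cvec xi (fst kl) (snd kl)))
      (fun kl => dot ue (cvec xi (fst kl) (snd kl)) - dot w (cvec xi (fst kl) (snd kl)))
      (list_prod chi chi)) as [dC [HdC HC]].
  { intros [k l] Hkl [P1 [P2 P3]]. simpl in *.
    apply in_prod_iff in Hkl. destruct Hkl as [Hk Hl].
    destruct (Req_dec (dot w (cvec xi k l)) 0) as [E|E]; [right|left; auto].
    rewrite E. unfold ue. rewrite dot_scale. specialize (Hu k l Hk Hl P1 P2 P3).
    intro C. apply Hu. nra. }
  destruct (ev_list (fun _ => True) (fun _ => A2 xi m + 2 * dot w (psub xi m))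
      (fun _ => 2 * dot ue (psub xi m) - 2 * dot w (psub xi m)) (m :: nil)) as [dM [HdM HM]].
  { intros. left. lra. }
  set (s := Rmin (Rmin dC dM) 1 / 2).
  assert (Hs0: 0 < s).
  { unfold s. assert (0 < Rmin (Rmin dC dM) 1) by (repeat apply Rmin_glb_lt; lra). lra. }
  assert (Hs1: s < 1).
  { unfold s. pose proof (Rmin_r (Rmin dC dM) 1). lra. }
  assert (HsC: s < dC).
  { unfold s. pose proof (Rmin_l (Rmin dC dM) 1). pose proof (Rmin_l dC dM). lra. }
  assert (HsM: s < dM).
  { unfold s. pose proof (Rmin_l (Rmin dC dM) 1). pose proof (Rmin_r dC dM). lra. }
  set (v := padd (pscale (1 - s) w) (pscale s ue)).
  assert (Hv: forall q, dot v q = (1 - s) * dot w q + s * dot ue q).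
  { intro q. unfold v. rewrite dot_add, !dot_scale. ring. }
  assert (Hvm: A2 xi m + 2 * dot v (psub xi m) < 0).
  { assert (HH := proj2 (proj2 (HM s (conj Hs0 HsM) m (or_introl eq_refl) I)) Hbad).
    rewrite Hv. lra. }
  assert (Hvg: forall k l, In k chi -> In l chi -> k <> xi -> l <> xi -> k <> l ->
      dot v (cvec xi k l) <> 0).
  { intros k l Hk Hl P1 P2 P3.
    assert (HH := proj1 (HC s (conj Hs0 HsC) (k,l) (in_prod chi chi k l Hk Hl) (conj P1 (conj P2 P3)))).
    simpl in HH. rewrite Hv. intro C; apply HH. lra. }
  assert (HvN: forall k, neighbor chi xi k -> 0 < A2 xi k + 2 * dot v (psub xi k)).
  { intros k Nk. pose proof (HN k Nk) as H1.
    destruct Nk as [_ [Hk [Hik _]]].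
    assert (H2 := He k Hk (not_eq_sym Hik)).
    rewrite Hv. unfold ue. rewrite dot_scale.
    assert (0 <= (1 - s) * (A2 xi k + 2 * dot w (psub xi k))) by (apply Rmult_le_pos; lra).
    assert (0 < s * (A2 xi k + 2 * dot u (psub xi k) * eps)) by (apply Rmult_lt_0_compat; lra).
    lra. }
  assert (Hvm': dot v (psub xi m) < 0) by (pose proof (A2_nonneg xi m); lra).
  set (f := fun k => A2 xi k / (- 2 * dot v (psub xi k))).
  destruct (argmin_list (fun k => dot v (psub xi k) < 0) f chi m Hm Hvm')
    as [k0 [Hk0 [Hk0n Hmin]]].
  assert (Hk0i: k0 <> xi).
  { intro E; subst k0. rewrite dot_self_zero in Hk0n. lra. }
  set (t := f k0).
  assert (HAk0 := A2_pos xi k0 Hk0i).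
  assert (Ht0: 0 < t).
  { unfold t, f. apply Rdiv_lt_0_compat; lra. }
  assert (Hfm: f m < 1).
  { unfold f. apply Rmult_lt_reg_r with (- 2 * dot v (psub xi m)); [lra|].
    unfold Rdiv. rewrite Rmult_assoc, Rinv_l by lra. lra. }
  assert (Ht1: t < 1) by (specialize (Hmin m Hm Hvm'); unfold t; lra).
  assert (EA: forall k, dot v (psub xi k) < 0 -> A2 xi k = f k * (- 2 * dot v (psub xi k))).
  { intros k Hkn. unfold f. field. lra. }
  assert (Heq0: A2 xi k0 + 2 * t * dot v (psub xi k0) = 0).
  { rewrite (EA k0 Hk0n). unfold t. ring. }
  assert (Hposl: forall l, In l chi -> l <> xi -> l <> k0 -> 0 < A2 xi l + 2 * t * dot v (psub xi l)).
  { intros l Hl P1 P2.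
    destruct (Rlt_le_dec (dot v (psub xi l)) 0) as [Vn|Vp].
    - specialize (Hmin l Hl Vn). fold t in Hmin.
      destruct (Req_dec t (f l)) as [Et|Et].
      + exfalso. apply (Hvg k0 l Hk0 Hl Hk0i P1 (not_eq_sym P2)).
        rewrite dot_cvec. rewrite (EA k0 Hk0n), (EA l Vn). fold t. rewrite <- Et. ring.
      + rewrite (EA l Vn).
        assert (0 < (- 2 * dot v (psub xi l)) * (f l - t)) by (apply Rmult_lt_0_compat; lra).
        lra.
    - pose proof (A2_pos xi l P1). assert (0 <= t * dot v (psub xi l)) by (apply Rmult_le_pos; lra).
      lra. }
  assert (Nk0 := neighbor_of chi xi k0 v t Hi Hk0 Hk0i Heq0 Hposl).
  specialize (HvN k0 Nk0).
  assert (0 < (1 - t) * (- dot v (psub xi k0))) by (apply Rmult_lt_0_compat; lra).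
  lra.
Qed.

Lemma dp_iff chi xi x : dpcir chi xi x ->
  forall k, neighbor chi xi k -> 0 <= dot (psub x xi) (psub xi k).
Proof.
  intros H k Nk. specialize (H k Nk). revert H.
  unfold norm. rewrite pow2_sqrt by (unfold dot; nra).
  unfold dot, psub, padd; simpl. intro H. lra.
Qed.

Lemma cone chi xi x : In xi chi -> dpcir chi xi x ->
  forall l, In l chi -> 0 <= dot (psub x xi) (psub xi l).
Proof.
  intros Hi Hd l Hl.
  destruct (Rle_lt_dec 0 (dot (psub x xi) (psub xi l))) as [|Q]; [auto|exfalso].
  set (T := (A2 xi l + 1) / (- dot (psub x xi) (psub xi l))).
  assert (HT: 0 <= T) by (unfold T; apply Rlt_le, Rdiv_lt_0_compat; pose proof (A2_nonneg xi l); lra).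
  assert (K := key chi xi (pscale T (psub x xi)) Hi).
  assert (K2 : 0 <= A2 xi l + 2 * dot (pscale T (psub x xi)) (psub xi l)).
  { apply K; auto. intros k Nk. rewrite dot_scale.
    pose proof (dp_iff chi xi x Hd k Nk). pose proof (A2_nonneg xi k).
    assert (0 <= T * dot (psub x xi) (psub xi k)) by (apply Rmult_le_pos; lra). lra. }
  rewrite dot_scale in K2.
  assert (T * dot (psub x xi) (psub xi l) = - (A2 xi l + 1)) by (unfold T; field; lra).
  pose proof (A2_nonneg xi l). lra.
Qed.

Lemma cs_aux w1 w2 u1 u2 : w1*u1+w2*u2 >= u1*u1+u2*u2 -> w1*w1+w2*w2 >= u1*u1+u2*u2.
Proof.
  intro H.
  assert (CS: (w1*w1+w2*w2) * (u1*u1+u2*u2) - (w1*u1+w2*u2) * (w1*u1+w2*u2)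
             = (w1*u2 - w2*u1)*(w1*u2 - w2*u1)) by ring.
  pose proof (Rle_0_sqr (w1*u2 - w2*u1)). unfold Rsqr in *.
  pose proof (sq2_nonneg u1 u2) as HU. pose proof (sq2_nonneg w1 w2) as HD.
  destruct (Req_dec (u1*u1+u2*u2) 0) as [E|E]; [lra|].
  assert (HP: (u1*u1+u2*u2) * (u1*u1+u2*u2) <= (w1*u1+w2*u2) * (w1*u1+w2*u2))
    by (apply Rmult_le_compat; lra).
  apply Rle_ge. apply Rmult_le_reg_r with (u1*u1+u2*u2); [lra|]. lra.
Qed.

Theorem mainTheorem5 :
  forall (chi : list pt), constellation chi ->
  forall xi : pt, In xi chi ->
  forall x : pt, dpcir chi xi x ->
    (* (i) D_{i,DP} subset of D_{i,ML} *)
    (forall z : pt, dpcir chi xi z -> voronoi chi xi z) /\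
    (* (ii) *)
    (forall (xj y : pt), In xj chi -> dpcir chi xj y ->
        pdist x y >= pdist xi xj) /\
    (* (iii) *)
    (forall xj : pt, In xj chi ->
        pdist x xj >= pdist xi xj /\
        (xj <> xi -> pdist x xj = pdist xi xj -> x = xi)).
Proof.
  intros chi _ xi Hi x Hx.
  split; [|split].
  - intros z Hz l Hl. apply pdist_le. rewrite (gid z xi l).
    pose proof (cone chi xi z Hi Hz l Hl). pose proof (A2_nonneg xi l). lra.
  - intros xj y Hj Hy.
    pose proof (cone chi xi x Hi Hx xj Hj) as C1.
    pose proof (cone chi xj y Hj Hy xi Hi) as C2.
    apply Rle_ge. unfold pdist, norm. apply sqrt_le_1_alt.
    apply Rge_le. revert C1 C2. unfold dot, psub; simpl. intros C1 C2.
    apply cs_aux. lra.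
  - intros xj Hj. pose proof (cone chi xi x Hi Hx xj Hj) as C1.
    assert (G := gid x xi xj).
    assert (N0: 0 <= dot (psub x xi) (psub x xi)) by (unfold dot; apply sq2_nonneg).
    assert (A0: A2 xi xj = dot (psub xi xj) (psub xi xj)) by reflexivity.
    split.
    + apply Rle_ge. unfold pdist, norm. apply sqrt_le_1_alt. lra.
    + intros _ E. unfold pdist, norm in E. apply sqrt_inj in E; [|unfold dot; apply sq2_nonneg|unfold dot; apply sq2_nonneg].
      assert (Z: dot (psub x xi) (psub x xi) = 0) by lra.
      revert Z. unfold dot, psub; simpl. intro Z. apply sq2_zero in Z. apply pt_eq; lra.
Qed.
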